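(* Consider the publishing problem with constant publishing cost, i.e. $\alpha=0$ so that $C^{(p)}_t(N)=\beta\,\mathbb{1}[N\neq\emptyset]$ for some $\beta\ge 0$ (delay costs arbitrary non-negative, price dynamics $R$ arbitrary). Then there exists an optimal policy $\pi^*$ which at every step publishes either all available transactions or none of them, i.e. for every $t$, either $N^{\pi^*}_t=Q^{\pi^*}_t$ or $N^{\pi^*}_t=\emptyset$.
   Context: The publishing problem is the following infinite-horizon Markov decision process in discrete time $t=0,1,2,\dots$. At each time step $t$ a new transaction $H_t$ is created (transactions are indexed by their creation time). The state at time $t$ is $(t,P_t,Q_t)$, where $P_t\ge 0$ is the current gas price and $Q_t$ is the set of unpublished transactions (with $Q_0=\emptyset$). A policy $\pi$ chooses a subset $N^\pi_t=\pi(t,Q_t,P_t)\subseteq Q_t$ to publish, incurring cost $C_t(P_t,Q_t,N^\pi_t)=P_t\,C^{(p)}_t(N^\pi_t)+C^{(d)}_t(Q_t\setminus N^\pi_t)$. The state then updates by $Q_{t+1}=(Q_t\setminus N^\pi_t)\cup\{H_t\}$ and $P_{t+1}=R(P_t)$, where $R$ is a random function (Markov transition) on prices whose distribution is known. The publishing cost is $C^{(p)}_t(N)=\alpha|N|+\beta\,\mathbb{1}[N\neq\emptyset]$ with $\alpha,\beta\ge0$. The delay cost is $C^{(d)}_t(N)=\sum_{H_\tau\in N}C^{(d)}_{H_\tau}(t-\tau)$, where each $C^{(d)}_{H_\tau}$ is a non-negative function of the waiting time. The expected total cost of $\pi$ is $C(\pi)=\mathbb{E}\left[\sum_t\gamma^t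 C_t(P_t,Q^\pi_t,N^\pi_t)\right]$ with discount factor $0<\gamma<1$, and $\pi^*$ is optimal if $C(\pi^* )=\min_\pi C(\pi)$. *)

(* Defs.v *)
From HB Require Import structures.
From mathcomp Require Import all_boot all_order all_algebra.
From mathcomp Require Import finmap.
From mathcomp Require Import all_classical all_reals all_analysis.

Set Implicit Arguments.
Unset Strict Implicit.
Unset Printing Implicit Defensive.

Import Order.TTheory GRing.Theory Num.Theory.
Local Open Scope classical_set_scope.
Local Open Scope ring_scope.

(* Transactions are identified with their creation time (a nat).
   Sets of unpublished transactions are finite sets {fset nat}.
   A (deterministic, Markov) policy maps (t, Q_t, P_t) to a set N_t. *)
Definition policy (R : realType) := nat -> {fset nat} -> R -> {fset nat}.

(* Admissible policy: publishes a subset of the available transactions,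
   and is Borel-measurable in the price (so that expected costs make sense). *)
Definition admissible (R : realType) (pi : policy R) : Prop :=
  (forall t Q p, (pi t Q p `<=` Q)%fset) /\
  (forall t Q N, measurable [set p : R | pi t Q p = N]).

Definition markov_chain (R : realType) (d : measure_display)
  (Omega : measurableType d) (P : probability Omega R)
  (X : nat -> Omega -> R) (k : R.-pker R ~> R) : Prop :=
  forall (n : nat) (A : nat -> set R), (forall i, measurable (A i)) ->
    P (\bigcap_(i in `I_n.+2) (X i @^-1` A i)) =
    (\int[P]_(w in \bigcap_(i in `I_n.+1) (X i @^-1` A i)) k (X n w) (A n.+1))%E.

Section Publishing.
Variables (R : realType) (d : measure_display) (Omega : measurableType d).

Fixpoint queue (pi : policy R) (X : nat -> Omega -> R) (w : Omega) (t : nat)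
  : {fset nat} :=
  match t with
  | 0 => fset0
  | t'.+1 => let Q := queue pi X w t' in
             ((Q `\` pi t' Q (X t' w)) `|` [fset t'])%fset
  end.

Definition published (pi : policy R) (X : nat -> Omega -> R) (w : Omega)
  (t : nat) : {fset nat} :=
  pi t (queue pi X w t) (X t w).

Definition pub_cost (alpha beta : R) (N : {fset nat}) : R :=
  alpha * (#|` N|)%:R + (if N == fset0 then 0 else beta).

Definition delay_cost (D : nat -> nat -> R) (t : nat) (N : {fset nat}) : R :=
  \sum_(tau <- N) D tau (t - tau)%N.

Definition stage_cost (alpha beta : R) (D : nat -> nat -> R) (t : nat)
  (p : R) (Q N : {fset nat}) : R :=
  p * pub_cost alpha beta N + delay_cost D t (Q `\` N)%fset.

Definition path_cost (alpha beta gamma : R) (D : nat -> nat -> R)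
  (pi : policy R) (X : nat -> Omega -> R) (w : Omega) : \bar R :=
  (\sum_(0 <= t <oo)
     (gamma ^+ t * stage_cost alpha beta D t (X t w)
        (queue pi X w t) (published pi X w t))%:E)%E.

Definition total_cost (P : probability Omega R) (alpha beta gamma : R)
  (D : nat -> nat -> R) (pi : policy R) (X : nat -> Omega -> R) : \bar R :=
  (\int[P]_w path_cost alpha beta gamma D pi X w)%E.

End Publishing.

(* Main.v *)
Require Import Defs.
From HB Require Import structures.
From mathcomp Require Import all_boot all_order all_algebra.
From mathcomp Require Import finmap.
From mathcomp Require Import all_classical all_reals all_analysis.
From mathcomp Require Import measurable_realfun.

Import Order.TTheory GRing.Theory Num.Theory.
Local Open Scope classical_set_scope.
Local Open Scope ring_scope.

Set Implicit Arguments.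
Unset Strict Implicit.
Unset Printing Implicit Defensive.


Section transfer.
Local Open Scope ereal_scope.
Context d d' (T : measurableType d) (T' : measurableType d') (R : realType).
Variables (mu : {measure set T -> \bar R}) (S : set T) (mS : measurable S)
 (Y : T -> T') (mY : measurable_fun setT Y)
 (kap : T -> {measure set T' -> \bar R})
 (mkap : forall U, measurable U -> measurable_fun setT (kap ^~ U))
 (hyp : forall A, measurable A -> mu (S `&` Y @^-1` A) = \int[mu]_(w in S) kap w A).

Import HBNNSimple.

Let transfer_nnsfun (f : {nnsfun T' >-> R}) :
  \int[mu]_(w in S) (f (Y w))%:E = \int[mu]_(w in S) \int[kap w]_y (f y)%:E.
Proof.
under [in RHS]eq_integral => w _.
  rewrite integral_nnsfun// patch_setT sintegralE /=.
  over.
rewrite /= ge0_integral_fsum//; last 2 first.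
  - move=> r; apply: measurable_funeM.
    by apply: (measurable_funS measurableT) => //; exact: mkap.
  - move=> r w _; exact: nnsfun_mulemu_ge0.
under [in LHS]eq_integral do rewrite fimfunE -fsumEFin//.
rewrite ge0_integral_fsum//; last 2 first.
  - move=> r; apply/measurable_EFinP; apply: measurable_funM => //.
    by apply: measurableT_comp => //; apply: measurableT_comp.
  - by move=> r z _; rewrite EFinM nnfun_muleindic_ge0.
apply: eq_fsbigr => r rf.
have r0 : (0 <= r)%R by move: rf; rewrite inE => -[y _ <-]; exact: fun_ge0.
under eq_integral do rewrite EFinM.
rewrite ge0_integralZl//; last first.
  apply/measurable_EFinP; apply: (measurable_funS measurableT) => //.
  by apply: measurableT_comp => //; exact: measurable_indic.
rewrite ge0_integralZl//; last first.
  by apply: (measurable_funS measurableT) => //; exact: mkap.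
congr (_ * _).
have mfr : measurable (f @^-1` [set r]) by exact: measurable_sfunP.
rewrite -(hyp mfr).
transitivity (\int[mu]_(x in S) (\1_(Y @^-1` (f @^-1` [set r])) x)%:E).
  apply: eq_integral => x _. rewrite /indic. reflexivity.
rewrite integral_indic//; first by rewrite setIC.
by rewrite -[X in measurable X]setTI; apply: mY.
Qed.
Lemma transfer (g : T' -> \bar R) : (forall z, 0 <= g z) ->
  measurable_fun setT g ->
  \int[mu]_(w in S) g (Y w) = \int[mu]_(w in S) \int[kap w]_y g y.
Proof.
move=> g0 mg.
pose g_ := nnsfun_approx measurableT mg.
have cg z : (EFin \o g_^~ z) @ \oo --> g z.
  by apply: cvg_nnsfun_approx => // x _; exact: g0.
have ndg : nondecreasing_seq (g_ : (T' -> R)^nat) by exact: nd_nnsfun_approx.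
transitivity (\int[mu]_(w in S) limn (fun n => (g_ n (Y w))%:E)).
  by apply: eq_integral => w _; apply/esym/cvg_lim => //; exact: cg.
rewrite monotone_convergence//; last 3 first.
  - move=> n; apply/measurable_EFinP; apply: (measurable_funS measurableT) => //.
    exact: measurableT_comp.
  - by move=> n w _; rewrite lee_fin.
  - by move=> w _ a b ab; rewrite lee_fin; exact/lefP/ndg.
under eq_fun do rewrite transfer_nnsfun.
rewrite -monotone_convergence//; last 3 first.
  - move=> n; apply: (measurable_funS measurableT) => //.
    apply: measurable_fun_integral_kernel => //.
    + by move=> z; rewrite lee_fin.
    + exact/measurable_EFinP.
  - by move=> n w _; apply: integral_ge0 => z _; rewrite lee_fin.
  - move=> w _ a b ab; apply: ge0_le_integral => //.
    + by move=> z _; rewrite lee_fin.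
    + exact/measurable_EFinP.
    + exact/measurable_EFinP.
    + by move=> z _; rewrite lee_fin; exact/lefP/ndg.
apply: eq_integral => w _; rewrite -monotone_convergence//; last 3 first.
  - by move=> n; exact/measurable_EFinP.
  - by move=> n z _; rewrite lee_fin.
  - by move=> z _ a b ab; rewrite lee_fin; exact/lefP/ndg.
by apply: eq_integral => z _; apply/cvg_lim => //; exact: cg.
Qed.

End transfer.


Section piece.
Local Open Scope ereal_scope.
Context (R : realType) (d : measure_display) (T : measurableType d).

Lemma meas_piece (q : T -> {fset nat}) (f : {fset nat} -> T -> \bar R) :
  (forall Q, measurable [set w | q w = Q]) ->
  (forall Q, measurable_fun setT (f Q)) ->
  measurable_fun setT (fun w => f (q w) w).
Proof.
move=> mq mf _ B mB; rewrite setTI.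
have -> : (fun w => f (q w) w) @^-1` B =
    \bigcup_(Q : {fset nat}) ([set w | q w = Q] `&` f Q @^-1` B).
  apply/seteqP; split => w.
    by move=> Bw; exists (q w) => //.
  by move=> [Q _ [/= <-]].
apply: countable_bigcupT_measurable; first exact: countableP.
move=> Q; apply: measurableI => //.
by rewrite -[X in measurable X]setTI; exact: mf.
Qed.

Lemma meas_pieceR (q : T -> {fset nat}) (f : {fset nat} -> T -> R) :
  (forall Q, measurable [set w | q w = Q]) ->
  (forall Q, measurable_fun setT (f Q)) ->
  measurable_fun setT (fun w => f (q w) w).
Proof.
move=> mq mf; apply/measurable_EFinP.
apply: (meas_piece (f := fun Q w => (f Q w)%:E)) => // Q.
exact/measurable_EFinP.
Qed.

End piece.

Section markov.
Local Open Scope ereal_scope.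
Context (R : realType) (d : measure_display) (Omega : measurableType d)
  (P : probability Omega R) (X : nat -> Omega -> R) (k : R.-pker R ~> R).
Hypotheses (mX : forall t, measurable_fun setT (X t)) (mc : markov_chain P X k).

Definition rect j (A : nat -> set R) := \bigcap_(i in `I_j.+1) X i @^-1` A i.
Definition GG j := [set S | exists2 A : nat -> set R,
  (forall i, measurable (A i)) & S = rect j A].

Lemma mpre i B : measurable B -> measurable (X i @^-1` B).
Proof. by move=> mB; rewrite -[X in measurable X]setTI; exact: mX. Qed.

Lemma mrect j A : (forall i, measurable (A i)) -> measurable (rect j A).
Proof.
move=> mA; apply: bigcap_measurable; first by exists 0%N.
by move=> i _; exact: mpre.
Qed.

Lemma sigG_meas j S : <<s GG j >> S -> measurable S.
Proof.
apply: smallest_sub; first exact: sigma_algebra_measurable.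
by move=> _ [A mA ->]; exact: mrect.
Qed.

Lemma GG_setI j : setI_closed (GG j).
Proof.
move=> _ _ [A mA ->] [B mB ->]; exists (fun i => A i `&` B i).
  by move=> i; exact: measurableI.
apply/seteqP; split => w.
  by move=> [hA hB] i /= ij; split; [exact: hA|exact: hB].
by move=> h; split => i ij; have [] := h i ij.
Qed.

Lemma GG_pre j i B : (i <= j)%N -> measurable B -> GG j (X i @^-1` B).
Proof.
move=> ij mB; exists (fun l => if l == i then B else setT).
  by move=> l; case: ifP.
apply/seteqP; split => w.
  by move=> h l /= lj; case: ifP => // /eqP ->.
by move=> h; have := h i; rewrite eqxx; apply => /=; rewrite ltnS.
Qed.

Lemma GG_T j : GG j setT.
Proof.
have -> : setT = X 0 @^-1` setT by [].
exact: GG_pre.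
Qed.

Lemma markov_rect j B A : (forall i, measurable (B i)) -> measurable A ->
  P (rect j B `&` X j.+1 @^-1` A) = \int[P]_(w in rect j B) k (X j w) A.
Proof.
move=> mB mA.
have := mc j (A := fun i => if i == j.+1 then A else B i).
have -> : \bigcap_(i in `I_j.+2) X i @^-1` (if i == j.+1 then A else B i) =
   rect j B `&` X j.+1 @^-1` A.
  apply/seteqP; split => w.
    move=> h; split.
      move=> i /= ij; have := h i; rewrite ifN; last first.
        by rewrite neq_ltn ij.
      by apply => /=; rewrite ltnS ltnW.
    by have := h j.+1; rewrite eqxx; apply => /=.
  move=> [h1 h2] i /=; rewrite ltnS leq_eqVlt => /orP[/eqP ->|ij].
    by rewrite eqxx.
  by rewrite ifN ?neq_ltn ?ij//; apply: h1.
have -> : \bigcap_(i in `I_j.+1) X i @^-1` (if i == j.+1 then A else B i) =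
   rect j B.
  apply/seteqP; split => w h i /= ij; have := h i ij;
    by rewrite ifN// neq_ltn ij.
rewrite eqxx; apply.
by move=> i; case: ifP.
Qed.

Lemma mkap j A : measurable A -> measurable_fun setT (fun w => k (X j w) A).
Proof. by move=> mA; apply: measurableT_comp (measurable_kernel k _ mA) (mX j). Qed.

Lemma markov_indic j S : <<s GG j >> S -> forall A, measurable A ->
  P (S `&` X j.+1 @^-1` A) = \int[P]_(w in S) k (X j w) A.
Proof.
move=> sS.
have HT : forall A, measurable A ->
    P (setT `&` X j.+1 @^-1` A) = \int[P]_(w in setT) k (X j w) A.
  have [B mB BE] := GG_T j.
  by rewrite BE => A mA; exact: markov_rect.
apply: (@dynkin_induction _ (g_sigma_algebraType (GG j)) (GG j)
   [set S | forall A, measurable A ->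
     P (S `&` X j.+1 @^-1` A) = \int[P]_(w in S) k (X j w) A]) => //.
- exact: GG_setI.
- by move=> _ [B mB ->] A mA; exact: markov_rect.
- move=> S0 mS0 h A mA.
  have mS : @measurable _ Omega S0 := sigG_meas mS0.
  have mY := mpre j.+1 mA.
  have := HT A mA.
  rewrite -(setUv S0) setIUl measureU/=; last 3 first.
    - exact: measurableI.
    - by apply: measurableI => //; exact: measurableC.
    - by rewrite setIACA setICr set0I.
  rewrite ge0_integral_setU//; last 3 first.
    - by apply: measurableC.
    - by apply: (measurable_funS measurableT) => //; exact: mkap.
    - by rewrite disj_set2E setICr.
  have fS : \int[P]_(w in S0) k (X j w) A \is a fin_num.
    by rewrite -h// fin_num_measure//; exact: measurableI.
  rewrite h// !(addeC (\int[P]_(w in S0) k (X j w) A)).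
  by move=> /(congr1 (fun x => x - \int[P]_(w in S0) k (X j w) A)); rewrite !addeK.
- move=> F mF tF h A mA.
  have mF' n : @measurable _ Omega (F n) := sigG_meas (mF n).
  have mY := mpre j.+1 mA.
  rewrite setI_bigcupl measure_semi_bigcup//; first last.
  - by apply: bigcupT_measurable => n; apply: measurableI; [exact: mF'|exact: mY].
  - exact: trivIset_setIr.
  - by move=> n; apply: measurableI; [exact: mF'|exact: mY].
  rewrite ge0_integral_bigcup//.
  - by apply: eq_eseriesr => n _; exact: h.
  - by apply: (measurable_funS measurableT) => //; exact: mkap.
Qed.

Lemma markov_fun j S (g : R -> \bar R) : <<s GG j >> S ->
  (forall y, 0 <= g y) -> measurable_fun setT g ->
  \int[P]_(w in S) g (X j.+1 w) = \int[P]_(w in S) \int[k (X j w)]_y g y.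
Proof.
move=> sS g0 mg; apply: transfer => //.
- exact: (sigG_meas sS).
- by move=> U mU; exact: mkap.
- exact: (markov_indic sS).
Qed.

Lemma mint_kernel (h : R -> \bar R) : (forall y, 0 <= h y) ->
  measurable_fun setT h -> measurable_fun setT (fun x => \int[k x]_y h y).
Proof.
move=> h0 mh; apply: measurable_fun_integral_kernel => //.
exact: measurable_kernel.
Qed.

Lemma markov_q j (q : Omega -> {fset nat}) (h : {fset nat} -> R -> \bar R) :
  (forall Q, <<s GG j >> [set w | q w = Q]) ->
  (forall Q y, 0 <= h Q y) -> (forall Q, measurable_fun setT (h Q)) ->
  \int[P]_w h (q w) (X j.+1 w) = \int[P]_w \int[k (X j w)]_y h (q w) y.
Proof.
move=> hq h0 mh.
have mq Q : measurable [set w | q w = Q] := sigG_meas (hq Q).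
pose F i := [set w | choice.pickle (q w) = i].
have FE i : F i = match choice.pickle_inv i with Some Q => [set w | q w = Q] | None => set0 end.
  apply/seteqP; split => w /=.
    by move=> <-; rewrite choice.pickleK_inv.
  case E: (choice.pickle_inv i) => [Q|//] /= qQ.
  rewrite /F /= qQ.
  by have := @choice.pickle_invK {fset nat} i; rewrite E.
have sF i : <<s GG j >> (F i).
  rewrite FE; case: (choice.pickle_inv i) => [Q|]; first exact: hq.
  exact: (@measurable0 _ (g_sigma_algebraType (GG j))).
have mF i : measurable (F i) := sigG_meas (sF i).
have UF : \bigcup_i F i = setT.
  by apply/seteqP; split => // w _; exists (choice.pickle (q w)).
have tF : trivIset setT F.
  by move=> a b _ _ [w [/= <- <-]].
have m1 : measurable_fun setT (fun w => h (q w) (X j.+1 w)).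
  apply: (meas_piece (f := fun Q w => h Q (X j.+1 w))) => // Q.
  exact: measurableT_comp.
have m2 : measurable_fun setT (fun w => \int[k (X j w)]_y h (q w) y).
  apply: (meas_piece (f := fun Q w => \int[k (X j w)]_y h Q y)) => // Q.
  exact: (measurableT_comp (mint_kernel (h0 Q) (mh Q)) (mX j)).
rewrite -UF !ge0_integral_bigcup//; last 3 first.
- by rewrite UF.
- by move=> w _; apply: integral_ge0 => y _.
- by rewrite UF.
apply: eq_eseriesr => i _.
have := sF i; rewrite FE; case: (choice.pickle_inv i) => [Q|] sFi; last first.
  by rewrite !integral_set0.
transitivity (\int[P]_(w in [set w | q w = Q]) h Q (X j.+1 w)).
  by apply: eq_integral => w; rewrite inE /= => ->.
rewrite markov_fun//.
by apply: eq_integral => w; rewrite inE /= => ->.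
Qed.


End markov.


Section dp.
Context (R : realType) (k : R.-pker R ~> R) (beta gamma : R) (D : nat -> nat -> R).
Hypotheses (b0 : 0 <= beta) (g0 : 0 < gamma) (D0 : forall tau w, 0 <= D tau w).

Lemma delay_ge0 t N : 0 <= delay_cost D t N.
Proof. by rewrite /delay_cost; apply: sumr_ge0. Qed.

Lemma delay_mono t N N' : (N `<=` N')%fset ->
  delay_cost D t N <= delay_cost D t N'.
Proof.
move=> NN'; rewrite /delay_cost (big_fsetID _ (mem N) N') /=.
rewrite [in X in _ <= X](@eq_fbigl _ _ _ _ _ N); last first.
  move=> x; rewrite !inE; apply/andP/idP => [[]//|xN].
  by split=> //; exact: (fsubsetP NN').
by rewrite lerDl; apply: sumr_ge0.
Qed.

Definition cst t p Q N : R := stage_cost 0 beta D t (Num.max p 0) Q N.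
Definition nxt t (Q N : {fset nat}) := ((Q `\` N) `|` [fset t])%fset.

Lemma pub_ge0 N : 0 <= pub_cost 0 beta N.
Proof. by rewrite /pub_cost mul0r add0r; case: ifP. Qed.

Lemma cst_ge0 t p Q N : 0 <= cst t p Q N.
Proof.
rewrite /cst /stage_cost addr_ge0 ?delay_ge0// mulr_ge0 ?pub_ge0//.
by rewrite le_max lexx orbT.
Qed.

Lemma mcst t Q N : measurable_fun setT (fun p => cst t p Q N).
Proof.
rewrite /cst /stage_cost; apply: measurable_funD => //.
apply: measurable_funM => //.
exact: measurable_maxr.
Qed.

Local Open Scope ereal_scope.

Definition act (V : nat -> {fset nat} -> R -> \bar R) t Q p N :=
  (cst t p Q N)%:E + gamma%:E * \int[k p]_y V t.+1 (nxt t Q N) y.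

Fixpoint Wn m : nat -> {fset nat} -> R -> \bar R :=
  match m with
  | 0 => fun _ _ _ => 0
  | m'.+1 => fun t Q p => mine (act (Wn m') t Q p fset0) (act (Wn m') t Q p Q)
  end.

Definition good (V : nat -> {fset nat} -> R -> \bar R) :=
  (forall t Q, measurable_fun setT (V t Q)) /\ (forall t Q p, 0 <= V t Q p).

Lemma act_good V t Q N : good V ->
  measurable_fun setT (fun p => act V t Q p N) /\ forall p, 0 <= act V t Q p N.
Proof.
move=> [mV V0]; split.
  apply: emeasurable_funD.
    by apply/measurable_EFinP; exact: mcst.
  apply: measurable_funeM.
  exact: mint_kernel.
move=> p; apply: adde_ge0; first by rewrite lee_fin cst_ge0.
apply: mule_ge0; first by rewrite lee_fin ltW.
by apply: integral_ge0 => y _.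
Qed.

Lemma Wn_good m : good (Wn m).
Proof.
elim: m => [|m [mW W0]]; first by split => // t Q; exact: measurable_cst.
have gW : good (Wn m) by [].
split => t Q.
  apply: measurable_mine.
    exact: (act_good _ _ _ gW).1.
  exact: (act_good _ _ _ gW).1.
move=> p /=; rewrite le_min.
by rewrite (act_good _ _ _ gW).2 (act_good _ _ _ gW).2.
Qed.

Lemma mine_le2 (a b a' b' : \bar R) : a <= a' -> b <= b' -> mine a b <= mine a' b'.
Proof.
move=> h1 h2; rewrite le_min; apply/andP; split; rewrite ge_min.
  by rewrite h1.
by rewrite h2 orbT.
Qed.

Lemma act_mono V V' t Q p N : good V -> good V' ->
  (forall t Q p, V t Q p <= V' t Q p) -> act V t Q p N <= act V' t Q p N.
Proof.
move=> [mV V0] [mV' V'0] VV'; rewrite /act; apply: leeD2l.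
apply: lee_wpmul2l; first by rewrite lee_fin ltW.
by apply: ge0_le_integral => // y _; exact: VV'.
Qed.

Lemma act_le V t Q Q' p N N' : good V ->
  (forall t A B p, (A `<=` B)%fset -> V t A p <= V t B p) ->
  (cst t p Q N <= cst t p Q' N')%R -> (nxt t Q N `<=` nxt t Q' N')%fset ->
  act V t Q p N <= act V t Q' p N'.
Proof.
move=> [mV V0] monoV c1 n1; rewrite /act; apply: leeD; first by rewrite lee_fin.
apply: lee_wpmul2l; first by rewrite lee_fin ltW.
by apply: ge0_le_integral => // y _; exact: monoV.
Qed.

Lemma cst_all t p Q :
  cst t p Q Q = (Num.max p 0 * (if Q == fset0 then 0 else beta))%R.
Proof.
rewrite /cst /stage_cost /pub_cost fsetDv /delay_cost big_seq_fset0.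
by rewrite mul0r add0r addr0.
Qed.

Lemma nxt_all t Q : nxt t Q Q = [fset t]%fset.
Proof. by rewrite /nxt fsetDv fset0U. Qed.

Lemma cst_none t p Q : cst t p Q fset0 = delay_cost D t Q.
Proof. by rewrite /cst /stage_cost /pub_cost eqxx mul0r add0r mulr0 add0r fsetD0. Qed.

Lemma nxt_none t Q : nxt t Q fset0 = (Q `|` [fset t])%fset.
Proof. by rewrite /nxt fsetD0. Qed.

Lemma Wn_nd m t Q p : Wn m t Q p <= Wn m.+1 t Q p.
Proof.
elim: m t Q p => [|m IH] t Q p; first by have [_ ->] := Wn_good 1.
by apply: mine_le2; apply: act_mono; first [exact: (Wn_good m) | exact: (Wn_good m.+1) | exact: IH].
Qed.

Lemma Wn_monoQ m : forall t A B p, (A `<=` B)%fset -> Wn m t A p <= Wn m t B p.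
Proof.
elim: m => [//|m IH] t A B p AB /=.
have gW := Wn_good m.
rewrite le_min; apply/andP; split.
  rewrite ge_min; apply/orP; left; apply: act_le => //.
    by rewrite !cst_none; exact: delay_mono.
  by rewrite !nxt_none; exact: fsetSU.
have [A0|A0] := eqVneq A fset0.
  rewrite ge_min; apply/orP; left; apply: act_le => //.
    by rewrite A0 cst_none /delay_cost big_seq_fset0 cst_ge0.
  by rewrite A0 nxt_none nxt_all fset0U fsubset_refl.
have B0 : B != fset0.
  by apply: contraNneq A0 => B0; rewrite -fsubset0 -B0.
rewrite ge_min; apply/orP; right; apply: act_le => //.
  by rewrite !cst_all (negbTE A0) (negbTE B0).
by rewrite !nxt_all fsubset_refl.
Qed.

Lemma Wn_bellman m t Q p N : (N `<=` Q)%fset ->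
  Wn m.+1 t Q p <= act (Wn m) t Q p N.
Proof.
move=> NQ /=; have gW := Wn_good m.
have [N0|N0] := eqVneq N fset0.
  by rewrite N0 ge_min lexx.
have Q0 : Q != fset0.
  by apply: contraNneq N0 => Q0; rewrite -fsubset0 -Q0.
rewrite ge_min; apply/orP; right; apply: act_le => //.
- exact: Wn_monoQ.
- rewrite cst_all (negbTE Q0) /cst /stage_cost /pub_cost (negbTE N0).
  by rewrite mul0r add0r lerDl delay_ge0.
- by rewrite nxt_all /nxt fsubsetUr.
Qed.

Definition Winf t Q p := limn (fun m => Wn m t Q p).

Lemma Wn_ndseq t Q p : nondecreasing_seq (fun m => Wn m t Q p).
Proof. by apply/nondecreasing_seqP => m; exact: Wn_nd. Qed.

Lemma Wn_cvg t Q p : (fun m => Wn m t Q p) @ \oo --> Winf t Q p.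
Proof. exact: ereal_nondecreasing_is_cvgn (Wn_ndseq t Q p). Qed.

Lemma Wn_le_Winf m t Q p : Wn m t Q p <= Winf t Q p.
Proof.
rewrite /Winf (cvg_lim _ (ereal_nondecreasing_cvgn (Wn_ndseq t Q p)))//.
by apply: ereal_sup_ubound; exists m.
Qed.

Lemma Winf_good : good Winf.
Proof.
split => [t Q|t Q p].
  apply: (@emeasurable_fun_cvg _ _ _ _ (fun m => Wn m t Q)).
    by move=> m; exact: (Wn_good m).1.
  by move=> x _; exact: Wn_cvg.
exact: le_trans ((Wn_good 0).2 t Q p) (Wn_le_Winf 0 t Q p).
Qed.

Lemma Winf_monoQ t A B p : (A `<=` B)%fset -> Winf t A p <= Winf t B p.
Proof.
move=> AB; apply: lee_lim.
- exact: ereal_nondecreasing_is_cvgn (Wn_ndseq t A p).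
- exact: ereal_nondecreasing_is_cvgn (Wn_ndseq t B p).
- by apply: nearW => m; exact: Wn_monoQ.
Qed.

Lemma act_cvg t Q p N :
  (fun m => act (Wn m) t Q p N) @ \oo --> act Winf t Q p N.
Proof.
rewrite /act; apply: cvgeD.
- exact: fin_num_adde_defr.
- exact: cvg_cst.
apply: cvgeZl => //.
apply: (@cvg_monotone_convergence _ _ _ (k p) setT _ (fun m => Wn m t.+1 (nxt t Q N))) => //.
- by move=> m; exact: (Wn_good m).1.
- by move=> m y _; exact: (Wn_good m).2.
- by move=> y _; exact: Wn_ndseq.
Qed.

Lemma Winf_ge t Q p : mine (act Winf t Q p fset0) (act Winf t Q p Q) <= Winf t Q p.
Proof.
set L := Winf t Q p.
have key N : (forall m, act (Wn m) t Q p N <= L) -> act Winf t Q p N <= L.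
  move=> h; apply: (cvge_to_le (@act_cvg t Q p N)).
  exact: nearW.
have ndact N m n : (m <= n)%N -> act (Wn m) t Q p N <= act (Wn n) t Q p N.
  move=> mn; apply: act_mono; try exact: Wn_good.
  by move=> t' Q' p'; exact: Wn_ndseq.
have ex N : L < act Winf t Q p N -> exists m, L < act (Wn m) t Q p N.
  move=> hN; apply: contrapT => nex; move: hN; rewrite ltNge => /negP; apply.
  apply: key => m; rewrite leNgt; apply/negP => hm; apply: nex; by exists m.
rewrite leNgt; apply/negP; rewrite lt_min => /andP[/ex[m1 h1] /ex[m2 h2]].
have := @Wn_le_Winf (maxn m1 m2).+1 t Q p; rewrite /= -/L leNgt lt_min.
move=> /negP; apply; apply/andP; split.
  by apply: (lt_le_trans h1); apply: ndact; exact: leq_maxl.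
by apply: (lt_le_trans h2); apply: ndact; exact: leq_maxr.
Qed.

End dp.


Section main.
Context (R : realType) (d : measure_display) (Omega : measurableType d)
  (P : probability Omega R) (X : nat -> Omega -> R) (k : R.-pker R ~> R)
  (beta gamma : R) (D : nat -> nat -> R).
Hypotheses (b0 : 0 <= beta) (g0 : 0 < gamma) (D0 : forall tau w, 0 <= D tau w)
  (mX : forall t, measurable_fun setT (X t)) (X0 : forall t w, 0 <= X t w)
  (mc : markov_chain P X k).

Lemma meas_const (A : Prop) : measurable [set _ : R | A].
Proof.
case: (pselect A) => hA.
  by rewrite (_ : [set _ | A] = setT) //; apply/seteqP; split.
by rewrite (_ : [set _ | A] = set0) //; apply/seteqP; split.
Qed.

Lemma meas_pi (pi : policy R) (adm : admissible pi) t Q (F : {fset nat} -> Prop) :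
  measurable [set p : R | F (pi t Q p)].
Proof.
have -> : [set p : R | F (pi t Q p)] =
    \bigcup_(N : {fset nat}) ([set p | pi t Q p = N] `&` [set _ | F N]).
  apply/seteqP; split => p.
    by move=> h; exists (pi t Q p) => //.
  by move=> [N _ [/= -> ]].
apply: countable_bigcupT_measurable; first exact: countableP.
move=> N; apply: measurableI; first exact: adm.2.
exact: meas_const.
Qed.

Lemma queue_sig (pi : policy R) (adm : admissible pi) j m : (j <= m.+1)%N ->
  forall Q, <<s GG X m >> [set w | queue pi X w j = Q].
Proof.
elim: j => [|j IH] jm Q.
  rewrite /=; case: (pselect (fset0 = Q)) => h.
    rewrite (_ : [set _ | _] = setT); last by apply/seteqP; split.
    exact: (@measurableT _ (g_sigma_algebraType (GG X m))).
  rewrite (_ : [set _ | _] = set0); last by apply/seteqP; split.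
  exact: (@measurable0 _ (g_sigma_algebraType (GG X m))).
have jm' : (j <= m)%N by [].
have -> : [set w | queue pi X w j.+1 = Q] = \bigcup_(Q' : {fset nat})
   ([set w | queue pi X w j = Q'] `&`
    X j @^-1` [set p | ((Q' `\` pi j Q' p) `|` [fset j])%fset = Q]).
  apply/seteqP; split => w /=.
    by move=> h; exists (queue pi X w j) => //.
  by move=> [Q' _ [/= -> ]].
apply: (@countable_bigcupT_measurable _ (g_sigma_algebraType (GG X m))).
  exact: countableP.
move=> Q'; apply: (@measurableI _ (g_sigma_algebraType (GG X m))).
  by apply: IH; exact: ltnW.
apply: (@sub_sigma_algebra _ setT (GG X m)); apply: GG_pre => //.
exact: (meas_pi adm j Q' (fun N => ((Q' `\` N) `|` [fset j])%fset = Q)).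
Qed.

Lemma queue_meas (pi : policy R) (adm : admissible pi) j Q :
  measurable [set w | queue pi X w j = Q].
Proof. exact: (sigG_meas mX (queue_sig adm (leqnSn j) Q)). Qed.

Lemma mstage (pi : policy R) (adm : admissible pi) j :
  measurable_fun setT (fun w =>
    stage_cost 0 beta D j (X j w) (queue pi X w j) (published pi X w j)).
Proof.
rewrite /published.
apply: (meas_pieceR (q := fun w => queue pi X w j)
  (f := fun Q w => stage_cost 0 beta D j (X j w) Q (pi j Q (X j w)))) => // Q.
  exact: queue_meas.
apply: (meas_pieceR (q := fun w => pi j Q (X j w))
  (f := fun N w => stage_cost 0 beta D j (X j w) Q N)) => // N.
  rewrite (_ : [set w | pi j Q (X j w) = N] = X j @^-1` [set p | pi j Q p = N]) //.
  exact: (mpre mX _ (adm.2 j Q N)).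
by rewrite /stage_cost; apply: measurable_funD => //; apply: measurable_funM.
Qed.

Definition bb (pi : policy R) j := (\int[P]_w
  ((gamma ^+ j * stage_cost 0 beta D j (X j w) (queue pi X w j)
     (published pi X w j))%:E))%E.

Lemma stage_ge0 j p Q N : 0 <= p -> 0 <= stage_cost 0 beta D j p Q N.
Proof.
move=> p0; rewrite /stage_cost addr_ge0 ?delay_ge0// mulr_ge0//.
exact: pub_ge0.
Qed.

Local Open Scope ereal_scope.

Lemma step_eq (pi : policy R) (adm : admissible pi) V j : good V ->
  \int[P]_w ((gamma ^+ j)%:E *
      act k beta gamma D V j (queue pi X w j) (X j w) (published pi X w j)) =
  bb pi j + \int[P]_w ((gamma ^+ j.+1)%:E * V j.+1 (queue pi X w j.+1) (X j.+1 w)).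
Proof.
move=> [mV V0].
have gj0 : (0 <= gamma ^+ j)%R by rewrite exprn_ge0// ltW.
have gj10 : (0 <= gamma ^+ j.+1)%R by rewrite exprn_ge0// ltW.
transitivity (\int[P]_w (((gamma ^+ j * stage_cost 0 beta D j (X j w)
   (queue pi X w j) (published pi X w j))%:E) + (gamma ^+ j.+1)%:E *
   \int[k (X j w)]_y V j.+1 (queue pi X w j.+1) y)).
  apply: eq_integral => w _; rewrite /act /cst.
  rewrite (_ : (Num.max (X j w) 0)%R = X j w); last by rewrite max_l.
  rewrite ge0_muleDr//; last 2 first.
    by rewrite lee_fin stage_ge0.
    by apply: mule_ge0; [rewrite lee_fin ltW|apply: integral_ge0 => y _].
  by rewrite -EFinM muleA -EFinM -exprSr.
rewrite ge0_integralD//; last 4 first.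
- by move=> w _; rewrite lee_fin mulr_ge0// stage_ge0.
- by apply/measurable_EFinP; apply: measurable_funM => //; exact: mstage.
- by move=> w _; rewrite mule_ge0// ?lee_fin//; apply: integral_ge0.
- apply: measurable_funeM.
  apply: (meas_piece (q := fun w => queue pi X w j.+1)
    (f := fun Q w => \int[k (X j w)]_y V j.+1 Q y)) => // Q.
    exact: queue_meas.
  exact: (measurableT_comp (mint_kernel k (V0 j.+1 Q) (mV j.+1 Q)) (mX j)).
congr (_ + _).
transitivity (\int[P]_w \int[k (X j w)]_y
   ((gamma ^+ j.+1)%:E * V j.+1 (queue pi X w j.+1) y)).
  by apply: eq_integral => w _; rewrite ge0_integralZl.
apply/esym; apply: (markov_q mX mc (q := fun w => queue pi X w j.+1)
  (h := fun Q y => (gamma ^+ j.+1)%:E * V j.+1 Q y)).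
- by move=> Q; exact: queue_sig.
- by move=> Q y; rewrite mule_ge0// lee_fin.
- by move=> Q; apply: measurable_funeM.
Qed.

Lemma m_V (pi : policy R) (adm : admissible pi) V j : good V ->
  measurable_fun setT (fun w => V j (queue pi X w j) (X j w)).
Proof.
move=> [mV V0].
apply: (meas_piece (q := fun w => queue pi X w j) (f := fun Q w => V j Q (X j w))) => // Q.
  exact: queue_meas.
exact: (measurableT_comp (mV j Q) (mX j)).
Qed.

Lemma m_act (pi : policy R) (adm : admissible pi) V j : good V ->
  measurable_fun setT (fun w =>
    act k beta gamma D V j (queue pi X w j) (X j w) (published pi X w j)).
Proof.
move=> gV; rewrite /published.
apply: (meas_piece (q := fun w => queue pi X w j)
  (f := fun Q w => act k beta gamma D V j Q (X j w) (pi j Q (X j w)))) => // Q.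
  exact: queue_meas.
apply: (meas_piece (q := fun w => pi j Q (X j w))
  (f := fun N w => act k beta gamma D V j Q (X j w) N)) => // N.
  rewrite (_ : [set w | pi j Q (X j w) = N] = X j @^-1` [set p | pi j Q p = N]) //.
  exact: (mpre mX _ (adm.2 j Q N)).
exact: (measurableT_comp (act_good k b0 g0 D0 j Q N gV).1 (mX j)).
Qed.

Lemma low_step (pi : policy R) (adm : admissible pi) m j :
  \int[P]_w ((gamma ^+ j)%:E * Wn k beta gamma D m.+1 j (queue pi X w j) (X j w)) <=
  bb pi j + \int[P]_w ((gamma ^+ j.+1)%:E *
     Wn k beta gamma D m j.+1 (queue pi X w j.+1) (X j.+1 w)).
Proof.
have gj0 : (0 <= gamma ^+ j)%R by rewrite exprn_ge0// ltW.
have gW := Wn_good k b0 g0 D0 m.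
rewrite -step_eq//; apply: ge0_le_integral => //.
- move=> w _; rewrite mule_ge0// ?lee_fin//.
  exact: (Wn_good k b0 g0 D0 m.+1).2.
- apply: measurable_funeM; apply: m_V => //; exact: Wn_good.
- by apply: measurable_funeM; apply: m_act.
- move=> w _; apply: lee_wpmul2l; first by rewrite lee_fin.
  apply: Wn_bellman => //.
  exact: adm.1.
Qed.

Definition pistar : policy R := fun t Q p =>
  if act k beta gamma D (Winf k beta gamma D) t Q p fset0 <=
     act k beta gamma D (Winf k beta gamma D) t Q p Q then fset0 else Q.

Lemma pistar_adm : admissible pistar.
Proof.
split.
  by move=> t Q p; rewrite /pistar; case: ifP => _; [exact: fsub0set|exact: fsubset_refl].
move=> t Q N.
have gI := Winf_good k b0 g0 D0.
have mle : measurable [set p | act k beta gamma D (Winf k beta gamma D) t Q p fset0 <=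
     act k beta gamma D (Winf k beta gamma D) t Q p Q].
  rewrite -[X in measurable X]setTI; apply: measurable_lee.
  - exact: measurableT.
  - exact: (act_good k b0 g0 D0 t Q fset0 gI).1.
  - exact: (act_good k b0 g0 D0 t Q Q gI).1.
rewrite (_ : [set p | pistar t Q p = N] =
   ([set p | act k beta gamma D (Winf k beta gamma D) t Q p fset0 <=
     act k beta gamma D (Winf k beta gamma D) t Q p Q] `&` [set _ | fset0 = N]) `|`
   (~` [set p | act k beta gamma D (Winf k beta gamma D) t Q p fset0 <=
     act k beta gamma D (Winf k beta gamma D) t Q p Q] `&` [set _ | Q = N])).
  apply: measurableU; apply: measurableI => //; try exact: meas_const.
  exact: measurableC.
apply/seteqP; split => p; rewrite /pistar /=.
  by case: ifP => h E; [left|right]; split => //; rewrite h.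
by case: ifP => h [[h1 h2]|[h1 h2]] //; move: h1; rewrite h.
Qed.

Lemma act_pistar t Q p :
  act k beta gamma D (Winf k beta gamma D) t Q p (pistar t Q p) <=
  Winf k beta gamma D t Q p.
Proof.
apply: le_trans (Winf_ge k b0 g0 D0 t Q p); rewrite /pistar.
case: ifP => h; rewrite le_min lexx ?h//= andbT.
by move/negbT: h; rewrite -ltNge => /ltW.
Qed.

Lemma up_step j :
  bb pistar j + \int[P]_w ((gamma ^+ j.+1)%:E *
     Winf k beta gamma D j.+1 (queue pistar X w j.+1) (X j.+1 w)) <=
  \int[P]_w ((gamma ^+ j)%:E * Winf k beta gamma D j (queue pistar X w j) (X j w)).
Proof.
have gj0 : (0 <= gamma ^+ j)%R by rewrite exprn_ge0// ltW.
have gI := Winf_good k b0 g0 D0.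
rewrite -step_eq//; last exact: pistar_adm.
apply: ge0_le_integral => //.
- move=> w _; rewrite mule_ge0// ?lee_fin//.
  exact: (act_good k b0 g0 D0 _ _ _ gI).2.
- by apply: measurable_funeM; apply: m_act => //; exact: pistar_adm.
- by apply: measurable_funeM; apply: m_V => //; exact: pistar_adm.
- move=> w _; apply: lee_wpmul2l; first by rewrite lee_fin.
  exact: act_pistar.
Qed.

Lemma bb_ge0 pi j : 0 <= bb pi j.
Proof.
apply: integral_ge0 => w _; rewrite lee_fin; apply: mulr_ge0.
  exact: exprn_ge0 (ltW g0).
exact: stage_ge0.
Qed.

Lemma low_tel (pi : policy R) (adm : admissible pi) m : forall j,
  \int[P]_w ((gamma ^+ j)%:E * Wn k beta gamma D m j (queue pi X w j) (X j w)) <=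
  \sum_(j <= i < j + m) bb pi i.
Proof.
elim: m => [|m IH] j.
  by rewrite addn0 big_geq// (_ : (fun w => _) = (fun=> 0)) ?integral0//;
    apply/funext => w /=; rewrite mule0.
apply: le_trans (low_step adm m j) _.
rewrite addnS big_ltn ?ltnS ?leq_addr//.
by apply: leeD2l; rewrite -addSn; exact: IH.
Qed.

Lemma up_tel m : forall j,
  \sum_(j <= i < j + m) bb pistar i <=
  \int[P]_w ((gamma ^+ j)%:E * Winf k beta gamma D j (queue pistar X w j) (X j w)).
Proof.
have gI := Winf_good k b0 g0 D0.
elim: m => [|m IH] j.
  rewrite addn0 big_geq//; apply: integral_ge0 => w _.
  apply: mule_ge0; last exact: gI.2.
  by rewrite lee_fin; exact: exprn_ge0 (ltW g0).
apply: le_trans (up_step j).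
rewrite addnS big_ltn ?ltnS ?leq_addr//.
by apply: leeD2l; rewrite -addSn; exact: IH.
Qed.

Lemma total_eq (pi : policy R) (adm : admissible pi) :
  total_cost P 0 beta gamma D pi X = \sum_(0 <= i <oo) bb pi i.
Proof.
rewrite /total_cost /path_cost integral_nneseries//.
- move=> n; apply/measurable_EFinP; apply: measurable_funM => //.
  exact: mstage.
- move=> n w _; rewrite lee_fin; apply: mulr_ge0.
    exact: exprn_ge0 (ltW g0).
  exact: stage_ge0.
Qed.

End main.

Local Open Scope ereal_scope.

Lemma lemma1_aux (R : realType) (d : measure_display) (Omega : measurableType d)
  (P : probability Omega R) (X : nat -> Omega -> R) (k : R.-pker R ~> R)
  (beta gamma : R) (D : nat -> nat -> R) :
  (0 <= beta)%R -> (0 < gamma)%R -> (gamma < 1)%R ->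
  (forall tau w, 0 <= D tau w)%R ->
  (forall t, measurable_fun setT (X t)) ->
  (forall t w, 0 <= X t w)%R ->
  markov_chain P X k ->
  exists pistar : policy R,
    [/\ admissible pistar,
        (forall pi : policy R, admissible pi ->
           (total_cost P 0 beta gamma D pistar X
              <= total_cost P 0 beta gamma D pi X)%E)
      & (forall t w,
           published pistar X w t = queue pistar X w t \/
           published pistar X w t = fset0)].
Proof.
move=> b0 g0 g1 D0 mX X0 mc.
have padm := pistar_adm k b0 g0 D0.
exists (pistar k beta gamma D); split => //.
- move=> pi adm.
  rewrite (total_eq P b0 g0 D0 mX X0 padm) (total_eq P b0 g0 D0 mX X0 adm).
  have h1 : \sum_(0 <= i <oo) bb P X beta gamma D (pistar k beta gamma D) i <=
      \int[P]_w Winf k beta gamma D 0 fset0 (X 0%N w).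
    apply: lime_le.
      by apply: is_cvg_nneseries => n _ _; exact: (bb_ge0 P b0 g0 D0 X0).
    apply: nearW => m.
    have := up_tel b0 g0 D0 mX X0 mc m 0.
    rewrite add0n expr0.
    by under eq_integral do rewrite mul1e.
  apply: le_trans h1 _.
  have gW m := Wn_good k b0 g0 D0 m.
  rewrite /Winf (@monotone_convergence _ _ _ P setT measurableT
    (fun m w => Wn k beta gamma D m 0 fset0 (X 0%N w))); last 3 first.
  - by move=> m; exact: (measurableT_comp ((gW m).1 0%N fset0) (mX 0%N)).
  - by move=> m w _; exact: (gW m).2.
  - by move=> w _; exact: Wn_ndseq.
  apply: lime_le.
    apply: ereal_nondecreasing_is_cvgn => a b ab; apply: ge0_le_integral => //.
    - by move=> w _; exact: (gW a).2.
    - exact: (measurableT_comp ((gW a).1 0%N fset0) (mX 0%N)).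
    - exact: (measurableT_comp ((gW b).1 0%N fset0) (mX 0%N)).
    - by move=> w _; exact: Wn_ndseq.
  apply: nearW => m.
  have := low_tel b0 g0 D0 mX X0 mc adm m 0.
  rewrite add0n expr0.
  move=> h; apply: le_trans (le_trans _ h) _.
    by under [X in _ <= X]eq_integral do rewrite mul1e.
  apply: nneseries_lim_ge => n _ _; exact: (bb_ge0 P b0 g0 D0 X0).
- by move=> t w; rewrite /published /pistar; case: ifP => _; [right|left].
Qed.

Local Close Scope ereal_scope.
Unset Implicit Arguments.

Theorem lemma1 (R : realType) (d : measure_display) (Omega : measurableType d)
  (P : probability Omega R) (X : nat -> Omega -> R) (k : R.-pker R ~> R)
  (beta gamma : R) (D : nat -> nat -> R) :
  0 <= beta -> 0 < gamma -> gamma < 1 ->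
  (forall tau w, 0 <= D tau w) ->
  (forall t, measurable_fun setT (X t)) ->
  (forall t w, 0 <= X t w) ->
  markov_chain P X k ->
  exists pistar : policy R,
    [/\ admissible pistar,
        (forall pi : policy R, admissible pi ->
           (total_cost P 0 beta gamma D pistar X
              <= total_cost P 0 beta gamma D pi X)%E)
      & (forall t w,
           published pistar X w t = queue pistar X w t \/
           published pistar X w t = fset0)].
Proof. exact: lemma1_aux. Qed.
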